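(* Let $Q_{n,m}$ be as defined in the context. Every code of $Q_{n,m}$ has dimension at most $\lceil n/(m+1)\rceil$.
   Context: A quantum graph $G$ consists of a finite-dimensional complex inner product space $V(G)$ and a real vector space $E(G)$ of self-adjoint operators on $V(G)$ containing the identity $I$; write $|G|=\dim V(G)$ and $\|G\|=\dim E(G)-1$. A code of $G$ is a subspace $C\subseteq V(G)$ such that there is a function $\epsilon_C:E(G)\to\mathbb{R}$ with $P_CAP_C=\epsilon_C(A)P_C$ for all $A\in E(G)$, where $P_C$ is the orthogonal projection onto $C$. Let $n\ge 2$ and $1\le m\le n-1$ be integers. $Q_{n,m}$ denotes any quantum graph with $|Q_{n,m}|=n$, $\|Q_{n,m}\|=m$, such that: (i) $E(Q_{n,m})$ is commutative; (ii) (tropical) $E(Q_{n,m})$ has a basis $\{I,A_1,\dots,A_m\}$ and there is an orthonormal basis of $V(Q_{n,m})$ of common eigenvectors of the $A_i$ such that, writing the eigenvalues of $A_i$ in decreasing order $\lambda_{i,1},\dots,\lambda_{i,n}$ with corresponding common eigenvectors $w_{i,1},\dots,w_{i,n}$, one has $0<\lambda_{i,j+1}<\lambda_{i,j}/n^2$ for all $i$ and $1\le j<n$; (iii) (cyclical) for $1\le i<m$ and all $j$, $w_{i+1,j}=w_{i,j+s_i}$, with the second index taken modulo $n$ in $\{1,\dots,n\}$, where $s_i=\lfloor n/m\rfloor+1$ if $1\le i\le (n\bmod m)$ and $s_i=\lfloor n/m\rfloor$ otherwise; (iv) the common eigenvectors are enumerated as $w_1,\dots,w_n$ (each common eigenvector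 exactly once) so that for every $l\in\{1,\dots,n\}$ one has $w_l=w_{i,\lceil l/m\rceil}$ for some $i\in\{1,\dots,m\}$. *)

(* Defs.v *)
(* Complex scalars: any numClosedFieldType R (e.g. algC). *)
From HB Require Import structures.
From mathcomp Require Import all_boot all_order all_algebra.
Set Implicit Arguments. Unset Strict Implicit. Unset Printing Implicit Defensive.
Import Order.TTheory GRing.Theory Num.Theory.
Local Open Scope ring_scope.

(* Conventions: V(G) = R^n (rows), vectors are row vectors, operators act by
   v |-> v *m A, inner product <v, w> = v *m (adjmx w). *)

Definition adjmx (R : numClosedFieldType) p q (A : 'M[R]_(p, q)) : 'M[R]_(q, p) :=
  map_mx Num.conj A^T.

Definition selfadj (R : numClosedFieldType) n (A : 'M[R]_n) : Prop := adjmx A = A.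

Definition qbasis (R : numClosedFieldType) n (A : nat -> 'M[R]_n) (i : nat) : 'M[R]_n :=
  if i == 0%N then 1%:M else A i.

Definition qspan (R : numClosedFieldType) n m (A : nat -> 'M[R]_n) (M : 'M[R]_n) : Prop :=
  exists c : nat -> R, (forall i, c i \is Num.real) /\
    M = \sum_(0 <= i < m.+1) c i *: qbasis A i.

Definition qindep (R : numClosedFieldType) n m (A : nat -> 'M[R]_n) : Prop :=
  forall c : nat -> R, (forall i, c i \is Num.real) ->
    \sum_(0 <= i < m.+1) c i *: qbasis A i = 0 -> forall i, (i <= m)%N -> c i = 0.

Definition orth_proj_onto (R : numClosedFieldType) n (P C : 'M[R]_n) : Prop :=
  selfadj P /\ P *m P = P /\ (P == C)%MS.

(* C (row space) is a code of the quantum graph with edge space E. *)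
Definition is_code (R : numClosedFieldType) n (E : 'M[R]_n -> Prop) (C : 'M[R]_n) : Prop :=
  exists P : 'M[R]_n, orth_proj_onto P C /\
    exists eps : 'M[R]_n -> R, forall M, E M ->
      eps M \is Num.real /\ P *m M *m P = eps M *: P.

Definition wrap1n (k n : nat) : nat := ((k.-1 %% n).+1)%N.

Definition ceil_div (a b : nat) : nat := ((a + b.-1) %/ b)%N.

Definition shift_s (n m i : nat) : nat :=
  if (1 <= i <= n %% m)%N then (n %/ m).+1 else (n %/ m)%N.

(* Main.v *)
Require Import Defs.
From HB Require Import structures.
From mathcomp Require Import all_boot all_order all_algebra.
Import Order.TTheory GRing.Theory Num.Theory.
Local Open Scope ring_scope.
From mathcomp Require Import zify.
Set Implicit Arguments. Unset Strict Implicit. Unset Printing Implicit Defensive.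
Lemma tr_pid (F : fieldType) n r : (r <= n)%N -> \tr (pid_mx r : 'M[F]_n) = r%:R.
Proof.
move=> rn; rewrite /mxtrace.
under eq_bigr do rewrite mxE eqxx /=.
rewrite -natr_sum; congr (_%:R).
rewrite -(big_mkord xpredT (fun i => nat_of_bool (i < r)%N)).
rewrite (@big_cat_nat _ _ _ r 0 n) //=.
rewrite [X in (_ + X)%N]big_nat_cond.
rewrite [X in (_ + X)%N]big1 ?addn0; last by move=> i /andP[/andP[/leq_gtF->]].
rewrite big_nat_cond.
rewrite (eq_bigr (fun _ => 1%N)); last by move=> i /andP[/andP[_ ->]].
by rewrite -big_nat_cond sum_nat_const_nat muln1 subn0.
Qed.
Lemma tr_idem (F : fieldType) n (Q : 'M[F]_n) : Q *m Q = Q -> \tr Q = (\rank Q)%:R.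
Proof.
move=> QQ.
have eQ := mulmx_ebase Q.
have := rank_leq_col Q.
move: eQ; set L := col_ebase Q; set U := row_ebase Q; move: (\rank Q) => r eQ rn.
have Lu : L \in unitmx by apply: col_ebase_unit.
have Uu : U \in unitmx by apply: row_ebase_unit.
have key : pid_mx r *m (U *m L) *m pid_mx r = pid_mx r :> 'M_n.
  have := QQ; rewrite -eQ => H.
  have H2 : L *m (pid_mx r *m (U *m L) *m pid_mx r) *m U = L *m pid_mx r *m U.
    by rewrite -H !mulmxA.
  rewrite -!mulmxA in H2.
  have H3 := congr1 (mulmx (invmx L)) H2; rewrite !mulKmx // in H3.
  have H4 := congr1 (fun X => X *m invmx U) H3; rewrite /= !mulmxA !mulmxK // in H4.
  by rewrite -!mulmxA; rewrite -!mulmxA in H4.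
have pp := (@pid_mx_id F n n n r rn).
rewrite -eQ mxtrace_mulC mulmxA -pp mulmxA mxtrace_mulC.
by rewrite !mulmxA -(mulmxA _ U L) key tr_pid.
Qed.

Lemma adjmxM (R : numClosedFieldType) p q r (A : 'M[R]_(p, q)) (B : 'M[R]_(q, r)) :
  adjmx (A *m B) = adjmx B *m adjmx A.
Proof. by rewrite /adjmx trmx_mul map_mxM. Qed.

Lemma adjmxK (R : numClosedFieldType) p q (A : 'M[R]_(p, q)) : adjmx (adjmx A) = A.
Proof. by apply/matrixP => i j; rewrite !mxE conjCK. Qed.

Lemma adjmxE (R : numClosedFieldType) p q (A : 'M[R]_(p, q)) i j : adjmx A i j = (A j i)^*.
Proof. by rewrite !mxE. Qed.

Section Lam.
Variables (R : numFieldType) (n : nat) (l : nat -> R).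
Hypothesis n2 : (2 <= n)%N.
Hypothesis hd : forall j, (1 <= j < n)%N -> 0 < l j.+1 /\ l j.+1 < l j / (n ^ 2)%:R.

Let nn0 : 0 < (n ^ 2)%:R :> R.
Proof. by rewrite ltr0n expn_gt0; apply/orP; left; lia. Qed.

Lemma lstep j : (1 <= j < n)%N -> l j.+1 * (n ^ 2)%:R < l j.
Proof. by move=> hj; rewrite -ltr_pdivlMr //; case: (hd hj). Qed.

Lemma lpos j : (1 <= j <= n)%N -> 0 < l j.
Proof.
move=> /andP[h1 h2]; case: j h1 h2 => [//|[|j]] _ h2.
  have [h3 h4] := hd (j:=1) (ltac:(apply/andP; split; lia)).
  have : 0 < l 1 / (n ^ 2)%:R by apply: lt_trans h4.
  by rewrite pmulr_lgt0 // invr_gt0.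
by have [] := hd (j:=j.+1) (ltac:(apply/andP; split; lia)).
Qed.

Lemma lstep_le j : (1 <= j < n)%N -> l j.+1 <= l j.
Proof.
move=> hj; apply: le_trans (ltW (lstep hj)).
rewrite ler_peMr //; first by apply: ltW; apply: lpos; lia.
by rewrite ler1n expn_gt0; apply/orP; left; lia.
Qed.

Lemma lmono j1 j2 : (1 <= j1)%N -> (j1 <= j2)%N -> (j2 <= n)%N -> l j2 <= l j1.
Proof.
move=> h1 h12; elim: j2 h12 => [|j2 IH] h12 h2n; first by lia.
case: (ltngtP j1 j2.+1) h12 => // [lt _|-> _]; last by [].
apply: le_trans (IH _ _); [apply: lstep_le|..]; lia.
Qed.

Lemma lstrong j d : (1 <= j)%N -> (j < d)%N -> (d <= n)%N -> l d * (n ^ 2)%:R < l j.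
Proof.
move=> h1 h2 h3; apply: le_lt_trans (lstep _); last by lia.
by rewrite ler_pM2r //; apply: lmono; lia.
Qed.
End Lam.

Section QF.
Variables (R : numClosedFieldType) (n : nat) (Q : 'M[R]_n).
Hypothesis Qsa : adjmx Q = Q.
Hypothesis QQ : Q *m Q = Q.

Lemma Qconj k l : Q l k = (Q k l)^*.
Proof. by rewrite -{1}Qsa adjmxE. Qed.

Lemma Qdiag k : Q k k = \sum_l `|Q k l| ^+ 2.
Proof.
rewrite -{1}QQ mxE; apply: eq_bigr => l _.
by rewrite normCK (Qconj k l).
Qed.

Lemma Qge0 k : 0 <= Q k k.
Proof. by rewrite Qdiag; apply: sumr_ge0 => l _; apply: exprn_ge0. Qed.

Lemma Qsq k : Q k k ^+ 2 <= Q k k.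
Proof.
rewrite {2}Qdiag (bigD1 k) //= -{1}(ger0_norm (Qge0 k)) lerDl.
by apply: sumr_ge0 => l _; apply: exprn_ge0.
Qed.

Lemma Qle1 k : Q k k <= 1.
Proof.
have := Qsq k; have := Qge0 k; rewrite le0r => /orP[/eqP->|q0]; first by rewrite ler01.
by move=> h; rewrite -(ler_pM2l q0) mulr1 -expr2.
Qed.

Variable (lk : 'I_n -> R).
Hypothesis lk0 : forall k, 0 <= lk k.

Lemma QDQ k : (Q *m diag_mx (\row_l lk l) *m Q) k k = \sum_l lk l * `|Q k l| ^+ 2.
Proof.
rewrite mul_mx_diag mxE; apply: eq_bigr => l _.
by rewrite !mxE normCK (Qconj k l) mulrCA mulrA.
Qed.

Lemma QDQ_ge k : lk k * Q k k ^+ 2 <= (Q *m diag_mx (\row_l lk l) *m Q) k k.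
Proof.
rewrite QDQ (bigD1 k) //= -{1}(ger0_norm (Qge0 k)) lerDl.
by apply: sumr_ge0 => l _; apply: mulr_ge0 => //; apply: exprn_ge0.
Qed.

Lemma QDQ_tr : \sum_k (Q *m diag_mx (\row_l lk l) *m Q) k k = \sum_l lk l * Q l l.
Proof.
under eq_bigr do rewrite QDQ.
rewrite exchange_big /=; apply: eq_bigr => l _.
rewrite -mulr_sumr Qdiag; congr (_ * _); apply: eq_bigr => k _.
by rewrite (Qconj k l) norm_conjC.
Qed.
End QF.

Lemma eps_bound (R : numClosedFieldType) n (Q : 'M[R]_n) (f : 'I_n -> 'I_n)
  (l : nat -> R) (lk : 'I_n -> R) (eps : R) d :
  adjmx Q = Q -> Q *m Q = Q -> injective f ->
  (forall t, lk (f t) = l t.+1) -> (forall k, 0 < lk k) ->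
  (1 <= d)%N -> (d <= n)%N -> \tr Q = d%:R ->
  Q *m diag_mx (\row_k lk k) *m Q = eps *: Q ->
  (forall j, (d <= j <= n)%N -> l j <= l d) ->
  (forall k, lk k * Q k k <= eps) /\ eps <= l d *+ n.
Proof.
move=> Qsa QQ finj hlk lkp d1 dn trQ eQ lmono.
have lk0 : forall k, 0 <= lk k by move=> k; apply: ltW.
have E2 : eps * d%:R = \sum_l lk l * Q l l.
  rewrite -(QDQ_tr Qsa QQ) eQ -trQ /mxtrace mulr_sumr.
  by apply: eq_bigr => k _; rewrite mxE.
have eps0 : 0 <= eps.
  rewrite -(pmulr_lge0 _ (x := d%:R)) ?ltr0n // E2.
  by apply: sumr_ge0 => k _; apply: mulr_ge0 => //; apply: Qge0.
have E4 : forall k, lk k * Q k k <= eps.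
  move=> k; have h := QDQ_ge Qsa QQ lk0 k; rewrite eQ mxE in h.
  have := Qge0 Qsa QQ k; rewrite le0r => /orP[/eqP->|q0]; first by rewrite mulr0.
  by rewrite -(ler_pM2r q0) -mulrA -expr2.
split=> //.
have E5 : eps * d%:R <= eps *+ d.-1 + l d *+ n.
  rewrite E2 (reindex_inj finj) /=.
  rewrite (bigID (fun t : 'I_n => (t < d.-1)%N)) /=; apply: lerD.
    apply: (@le_trans _ _ (\sum_(i < n | (i < d.-1)%N) eps)).
      by apply: ler_sum => t _; apply: E4.
    rewrite -(big_mkord (fun t => (t < d.-1)%N) (fun _ => eps)).
    have h : \sum_(0 <= i < d.-1) eps = \sum_(0 <= i < n | (i < d.-1)%N) eps.
      by rewrite (big_nat_widen 0 d.-1 n) //; lia.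
    by rewrite -h sumr_const_nat subn0.
  apply: (@le_trans _ _ (\sum_(i < n | ~~ (i < d.-1)%N) l d)).
    apply: ler_sum => t /negbTE ht; rewrite hlk; apply: le_trans (lmono t.+1 _).
      by apply: ler_piMr; [rewrite -hlk|apply: Qle1].
    by have := ltn_ord t; move: ht; case: (t : nat) => /=; lia.
  have -> : l d *+ n = \sum_(i < n) l d by rewrite sumr_const card_ord.
  rewrite [X in _ <= X](bigID (fun t : 'I_n => (t < d.-1)%N)) /= lerDr.
  have dd : (d.-1 < n)%N by lia.
  have := lkp (f (Ordinal dd)); rewrite hlk /= prednK // => ld0.
  by apply: sumr_ge0 => t _; apply: ltW.
move: E5; by rewrite -(prednK d1) mulr_natr mulrS addrC lerD2l.
Qed.

Unset Implicit Arguments.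
Theorem proposition1 (R : numClosedFieldType) (n m : nat)
    (A : nat -> 'M[R]_n)               (* A 1, ..., A m *)
    (u : 'I_n -> 'rV[R]_n)             (* orthonormal basis of common eigenvectors *)
    (lam : nat -> nat -> R)            (* lam i j = lambda_{i,j}, 1-based *)
    (w : nat -> nat -> 'I_n)           (* w_{i,j} = u (w i j), 1-based *)
  : (2 <= n)%N -> (1 <= m <= n.-1)%N ->
    (* E(Q) is a real space of self-adjoint operators with basis {I, A_1..A_m} *)
    (forall i, (1 <= i <= m)%N -> selfadj (A i)) ->
    qindep m A ->
    (* (i) commutative *)
    (forall M N, qspan m A M -> qspan m A N -> M *m N = N *m M) ->
    (* (ii) tropical *)
    (forall k l : 'I_n, u k *m adjmx (u l) = (k == l)%:R%:M) ->
    (forall i j1 j2, (1 <= i <= m)%N -> (1 <= j1 <= n)%N -> (1 <= j2 <= n)%N ->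
        w i j1 = w i j2 -> j1 = j2) ->
    (forall i j, (1 <= i <= m)%N -> (1 <= j <= n)%N ->
        u (w i j) *m A i = lam i j *: u (w i j)) ->
    (forall i j, (1 <= i <= m)%N -> (1 <= j < n)%N ->
        0 < lam i j.+1 /\ lam i j.+1 < lam i j / (n ^ 2)%:R) ->
    (* (iii) cyclical *)
    (forall i j, (1 <= i < m)%N -> (1 <= j <= n)%N ->
        w i.+1 j = w i (wrap1n (j + shift_s n m i) n)) ->
    (* (iv) enumeration *)
    (exists e : nat -> 'I_n,
        (forall l1 l2, (1 <= l1 <= n)%N -> (1 <= l2 <= n)%N -> e l1 = e l2 -> l1 = l2) /\
        (forall l, (1 <= l <= n)%N ->
           exists i, (1 <= i <= m)%N /\ e l = w i (ceil_div l m))) ->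
    forall C : 'M[R]_n, is_code (qspan m A) C ->
      (\rank C <= ceil_div n m.+1)%N.
Proof.
move=> n2 hm hsa hind hcomm horth hwinj heig hdec hcyc [e [einj he]] C.
move=> [P [[Psa [PP PC]] [eps heps]]].
rewrite /selfadj in Psa.
rewrite -(eqmx_rank PC).
have dn : (\rank P <= n)%N := rank_leq_col P.
have trP := tr_idem PP.
move: dn trP; move: (\rank P) => d dn trP.
rewrite leqNgt; apply/negP => hd.
have [m1 mn] : (1 <= m)%N /\ (m <= n.-1)%N by move/andP: hm.
have hd' : (n + m < d * m.+1)%N by rewrite -ltn_divLR.
have d1 : (1 <= d)%N by nia.
pose U : 'M[R]_n := \matrix_k u k.
have UU : U *m adjmx U = 1%:M.
  apply/matrixP => k l; rewrite !mxE.
  have := congr1 (fun M : 'M[R]_1 => M 0 0) (horth k l); rewrite /= !mxE eqxx mulr1n => <-.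
  by apply: eq_bigr => j _; rewrite !mxE.
have UsU : adjmx U *m U = 1%:M := mulmx1C UU.
have UsUK : forall p (X : 'M[R]_(n, p)), adjmx U *m (U *m X) = X.
  by move=> p X; rewrite mulmxA UsU mul1mx.
pose Q := U *m P *m adjmx U.
have Qsa : adjmx Q = Q by rewrite /Q !adjmxM adjmxK Psa mulmxA.
have QQ : Q *m Q = Q by rewrite /Q -!mulmxA !UsUK (mulmxA P P) PP.
have trQ : \tr Q = d%:R by rewrite /Q mxtrace_mulC mulmxA UsU mul1mx.
have key : forall i j, (1 <= i <= m)%N -> (1 <= j)%N -> (j < d)%N ->
    Q (w i j) (w i j) * n%:R < 1.
  move=> i j hi hj1 hjd.
  pose f : 'I_n -> 'I_n := fun t => w i t.+1.
  have finj : injective f.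
    move=> t1 t2 /hwinj => H; apply: val_inj; apply: succn_inj; apply: H => //;
      apply/andP; split => //; apply: ltn_ord.
  have [g fg gf] := injF_bij finj.
  pose lk k := lam i (g k).+1.
  have hlk : forall t, lk (f t) = lam i t.+1 by move=> t; rewrite /lk fg.
  have hdi : forall j, (1 <= j < n)%N -> 0 < lam i j.+1 /\ lam i j.+1 < lam i j / (n ^ 2)%:R.
    by move=> j' hj'; apply: hdec.
  have lkp : forall k, 0 < lk k.
    by move=> k; apply: (lpos n2 hdi); apply/andP; split => //; apply: ltn_ord.
  have Eig : forall k, u k *m A i = lk k *: u k.
    move=> k; have := heig i (g k).+1 hi (ltac:(apply/andP; split => //; apply: ltn_ord)).
    by rewrite -[w i _]/(f (g k)) gf.
  have D : U *m A i *m adjmx U = diag_mx (\row_k lk k).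
    have UA : U *m A i = diag_mx (\row_k lk k) *m U.
      apply/row_matrixP => k; rewrite row_mul rowK Eig mul_diag_mx.
      by apply/rowP => j'; rewrite !mxE.
    by rewrite UA -mulmxA UU mulmx1.
  have hA : qspan m A (A i).
    exists (fun k => (k == i)%:R); split; first by move=> k; apply: realn.
    have him : (i < m.+1)%N by case/andP: hi.
    rewrite big_mkord (bigD1 (Ordinal him)) //= eqxx scale1r big1 ?addr0.
      by rewrite /qbasis; case: (i) hi.
    by move=> k hk; rewrite -val_eqE /= in hk; rewrite (negbTE hk) scale0r.
  have [_ e2] := heps _ hA.
  have QDQ : Q *m diag_mx (\row_k lk k) *m Q = eps (A i) *: Q.
    rewrite -D /Q -!mulmxA !UsUK.
    have -> : P *m (A i *m (P *m adjmx U)) = (P *m A i *m P) *m adjmx U by rewrite !mulmxA.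
    by rewrite e2 -scalemxAl -scalemxAr.
  have lmono' : forall j', (d <= j' <= n)%N -> lam i j' <= lam i d.
    by move=> j' /andP[h1 h2]; apply: (lmono n2 hdi).
  have [E4 E5] := eps_bound Qsa QQ finj hlk lkp d1 dn trQ QDQ lmono'.
  have tj : (j.-1 < n)%N by lia.
  have h1 := E4 (f (Ordinal tj)); rewrite hlk /= prednK // in h1.
  have -> : w i j = f (Ordinal tj) by rewrite /f /= prednK.
  have lj0 : 0 < lam i j by apply: (lpos n2 hdi); lia.
  have hs := lstrong n2 hdi hj1 hjd dn.
  have n0 : 0 < n%:R :> R by rewrite ltr0n; lia.
  rewrite -(ltr_pM2l lj0) mulr1 mulrA.
  apply: le_lt_trans hs.
  apply: le_trans (_ : eps (A i) * n%:R <= _); first by rewrite ler_pM2r.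
  apply: le_trans (_ : lam i d *+ n * n%:R <= _); first by rewrite ler_pM2r.
  by rewrite -(mulr_natr (lam i d) n) -mulrA -natrM mulnn lexx.
pose L := minn n (m * d.-1).
have Ln : (L <= n)%N by rewrite geq_minl.
pose h : 'I_L -> 'I_n := fun t => e t.+1.
have hinj : injective h.
  move=> t1 t2 H; apply: val_inj; apply: succn_inj; apply: (einj _ _ _ _ H).
    by apply/andP; split => //; apply: leq_trans Ln; apply: ltn_ord.
  by apply/andP; split => //; apply: leq_trans Ln; apply: ltn_ord.
pose T := [set k : 'I_n | Q k k * n%:R < 1].
have sub : [set h t | t in 'I_L] \subset T.
  apply/subsetP => k /imsetP [t _ ->]; rewrite inE.
  have tL : (t < L)%N := ltn_ord t.
  have [i [hi ei]] : exists i, (1 <= i <= m)%N /\ e t.+1 = w i (ceil_div t.+1 m).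
    by apply: he; apply/andP; split => //; apply: leq_trans Ln.
  rewrite /h ei /ceil_div; apply: key => //.
    by rewrite divn_gt0 //; lia.
  rewrite ltn_divLR //.
  have : (t.+1 <= m * d.-1)%N by apply: leq_trans tL (geq_minr _ _).
  nia.
have cardT : (L <= #|T|)%N.
  by rewrite -{1}(card_ord L) -(card_imset _ hinj); apply: subset_leq_card.
have L0 : (0 < L)%N by rewrite /L leq_min; apply/andP; split; nia.
have hT : has (mem T) (index_enum 'I_n).
  apply/hasP; exists (h (Ordinal L0)); first by apply: mem_index_enum.
  by apply: (subsetP sub); apply: imset_f.
have E : d%:R * n%:R = \sum_k Q k k * n%:R :> R by rewrite -trQ /mxtrace mulr_suml.
have n0 : 0 < n%:R :> R by rewrite ltr0n; lia.
rewrite (bigID (mem T)) /= in E.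
have S1 : \sum_(k | k \in T) Q k k * n%:R < #|T|%:R.
  rewrite -sum1_card natr_sum; apply: ltr_sum => // k; rewrite inE => //.
have S2 : \sum_(k | k \notin T) Q k k * n%:R <= n%:R *+ #|[predC T]|.
  rewrite -sumr_const; apply: ler_sum => k _.
  by rewrite ler_piMl ?Qle1 // ltW.
have := ltr_leD S1 S2; rewrite -E -(mulr_natr (n%:R) #|[predC T]|) -!natrM -natrD ltr_nat.
have := cardC T; rewrite card_ord.
nia.
Qed.
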